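(* Fix $0<\varepsilon<1$ and let $n$ be sufficiently large with respect to $\varepsilon$; let $m=\lceil n/\log^8 n\rceil$. Let $P=\{(u_1,v_1),\dots,(u_s,v_s)\}$ be an $s$-pairing in $[n]$ with $s\ge\varepsilon n$, and let $\pi:[n]\to[m]$ be a map that is $\varepsilon$-respectful of $P$ and satisfies $|\pi^{-1}(x)|\le 2n/m$ for all $x\in[m]$. Let $\Pi$ be the set of all unordered pairs $\big\{\{\pi(u_i),\pi(u_j)\},\{\pi(v_i),\pi(v_j)\}\big\}$ over all $i,j\in[s]$ with $\pi(u_i)\neq\pi(u_j)$, $\pi(v_i)\ne\pi(v_j)$ and $\{\pi(u_i),\pi(u_j)\}\neq\{\pi(v_i),\pi(v_j)\}$. Then $|\Pi|\ge\varepsilon^4 n^2/6$.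
   Context: Logarithms are natural. An $s$-pairing in $[n]$ is a collection $\{(u_1,v_1),\dots,(u_s,v_s)\}$ of pairs where $u_1,\dots,u_s,v_1,\dots,v_s$ are distinct elements of $[n]$. A map $\pi:[n]\to[m]$ is $\varepsilon$-respectful of it if there is $I\subseteq[s]$ with $|I|\ge\varepsilon s$ such that $\pi(u_i)\ne\pi(v_i)$ for all $i\in I$ and the pairs $\{\pi(u_i),\pi(v_i)\}$, $i\in I$, are pairwise distinct. *)

(* Defs.v *)
From mathcomp Require Import all_boot all_order all_algebra.
From mathcomp Require Import all_classical all_reals all_analysis.
Set Implicit Arguments. Unset Strict Implicit. Unset Printing Implicit Defensive.
Import Order.TTheory GRing.Theory Num.Theory.
Local Open Scope ring_scope.

(* [n] is modelled by 'I_n. An s-pairing {(u_1,v_1),...,(u_s,v_s)} in [n] is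
   given by u v : 'I_s -> 'I_n such that all of u_1..u_s,v_1..v_s are distinct. *)
Definition is_pairing (n s : nat) (u v : 'I_s -> 'I_n) : Prop :=
  injective u /\ injective v /\ (forall i j, u i != v j).

(* The unordered pair {a, b} is the finite set [set a; b]. *)
Definition respectful (R : realType) (eps : R) (n m s : nat)
    (u v : 'I_s -> 'I_n) (pi : 'I_n -> 'I_m) : Prop :=
  exists I : {set 'I_s},
    eps * s%:R <= #|I|%:R /\
    (forall i, i \in I -> pi (u i) != pi (v i)) /\
    (forall i j, i \in I -> j \in I ->
       [set pi (u i); pi (v i)] = [set pi (u j); pi (v j)] -> i = j).

Definition Pi_set (n m s : nat) (u v : 'I_s -> 'I_n) (pi : 'I_n -> 'I_m)
  : {set {set {set 'I_m}}} :=
  [set [set [set pi (u ij.1); pi (u ij.2)]; [set pi (v ij.1); pi (v ij.2)]]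
    | ij in [set ij : 'I_s * 'I_s |
        [&& pi (u ij.1) != pi (u ij.2), pi (v ij.1) != pi (v ij.2) &
            [set pi (u ij.1); pi (u ij.2)] != [set pi (v ij.1); pi (v ij.2)]]]].

(* Main.v *)
Require Import Defs.
From mathcomp Require Import all_boot all_order all_algebra.
From mathcomp Require Import all_classical all_reals all_analysis.
From mathcomp Require Import lra ring.
Import Order.TTheory GRing.Theory Num.Theory.
Set Implicit Arguments. Unset Strict Implicit. Unset Printing Implicit Defensive.
Set Implicit Arguments. Unset Strict Implicit. Unset Printing Implicit Defensive.

Lemma set2_eqE (T : finType) (a b c d : T) :
  [set a; b] = [set c; d] -> (a = c /\ b = d) \/ (a = d /\ b = c).
Proof.
move=> E.
have Ha : a \in [set c; d] by rewrite -E !inE eqxx.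
have Hb : b \in [set c; d] by rewrite -E !inE eqxx orbT.
have Hc : c \in [set a; b] by rewrite E !inE eqxx.
have Hd : d \in [set a; b] by rewrite E !inE eqxx orbT.
move: Ha Hb Hc Hd; rewrite !inE.
by case/orP=> /eqP-> ; case/orP=> /eqP-> ; case/orP=> /eqP ?; case/orP=> /eqP ?;
  subst; auto.
Qed.

Lemma set2_eq_l (T : finType) (a b c : T) : [set a; b] = [set a; c] -> b = c.
Proof. by case/set2_eqE=> [[_ ->]|[-> ->]]. Qed.

Lemma card_fiber_sum (T U : finType) (A : {set T * U}) (I : {set T}) :
  (forall x, x \in A -> x.1 \in I) ->
  #|A| = \sum_(i in I) #|[set j | (i, j) \in A]|.
Proof.
move=> HA.
rewrite -sum1_card (partition_big (fun x => x.1) (mem I)) //=.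
apply: eq_bigr => i _.
rewrite sum1_card.
transitivity #|[set x in A | x.1 == i]|; first by apply: eq_card => x; rewrite inE.
rewrite -[RHS](card_imset _ (f := pair i)); last by move=> y z [].
apply: eq_card => -[x y] /=; rewrite !inE /=; apply/andP/imsetP.
    by case=> H /eqP E; subst; exists y; rewrite ?inE.
  by case=> z; rewrite inE => Hz [-> ->]; rewrite Hz eqxx.
Qed.

Lemma card_fiber_bound (T J : finType) (G : {set T}) (f : T -> J) k :
  (forall y, #|[set x in G | f x == y]| <= k) -> #|G| <= k * #|f @: G|.
Proof.
move=> Hk.
rewrite -sum1_card (partition_big_imset f) /=.
rewrite mulnC -sum_nat_const; apply: leq_sum => y _.
rewrite sum1_card; apply: leq_trans (Hk y); apply/eq_leq/eq_card => x; rewrite !inE.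
by []. Qed.
Lemma fiber4 (S T : finType) (a b : S -> T) (I : {set S}) :
  (forall i, i \in I -> a i != b i) ->
  (forall i j, i \in I -> j \in I -> [set a i; b i] = [set a j; b j] -> i = j) ->
  #|[set ij in finset.setX I I | [&& a ij.1 != a ij.2, b ij.1 != b ij.2 &
       [set a ij.1; a ij.2] != [set b ij.1; b ij.2]]]|
  <= 4 * #|[set [set [set a ij.1; a ij.2]; [set b ij.1; b ij.2]]
       | ij in [set ij : S * S | [&& a ij.1 != a ij.2, b ij.1 != b ij.2 &
            [set a ij.1; a ij.2] != [set b ij.1; b ij.2]]]]|.
Proof.
move=> Hab Hinj.
set G := [set ij in finset.setX I I | _].
set D := [set ij : S * S | _].
set f := fun ij : S * S => [set [set a ij.1; a ij.2]; [set b ij.1; b ij.2]].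
have GD : G \subset D by apply/fintype.subsetP => x; rewrite !inE => /andP[].
apply: (leq_trans (card_fiber_bound (f := f) (k := 4) _)).
  2: by rewrite leq_mul2l; apply/orP; right; apply: subset_leq_card; apply: imsetS.
move=> y.
set F := [set x in G | f x == y].
have [->|[[i0 j0] Hx0]] := set_0Vmem F; first by rewrite cards0.
set A := [set a i0; a j0]; set B := [set b i0; b j0].
have [Gx0 fx0] : (i0, j0) \in G /\ f (i0, j0) = y.
  by move: Hx0; rewrite inE => /andP[-> /eqP].
have AB : A != B by move: Gx0; rewrite !inE => /andP[_ /and3P[_ _ H]]; exact: H.
have key : forall x, x \in F ->
   [/\ x.1 \in I, x.2 \in I, a x.1 != a x.2, b x.1 != b x.2 &
   (([set a x.1; a x.2] = A /\ [set b x.1; b x.2] = B) \/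
    ([set a x.1; a x.2] = B /\ [set b x.1; b x.2] = A /\ [set a x.1; a x.2] != A))].
  move=> [i j]; rewrite !inE /= => /andP[/andP[/andP[Hi Hj] /and3P[h1 h2 _]] /eqP fx].
  split => //.
  have : f (i, j) = f (i0, j0) by rewrite fx fx0.
  rewrite /f /= => /set2_eqE [[-> ->]|[-> ->]]; [left|right] => //.
  by split => //; rewrite eq_sym.
set h := fun x : S * S => if [set a x.1; a x.2] == A then (a x.1, b x.1) else (b x.1, a x.1).
rewrite -(card_in_imset (f := h)).
  apply: leq_trans (subset_leq_card (_ : h @: F \subset finset.setX A B)) _.
    apply/fintype.subsetP => _ /imsetP[x Hx ->].
    have [_ _ _ _ [[EA EB]|[EA [EB NA]]]] := key x Hx; rewrite /h.
      by rewrite EA eqxx inE -EA -EB !inE !eqxx.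
    by rewrite (negbTE NA) inE -EA -EB !inE !eqxx ?orbT.
  by rewrite cardsX !cards2; case: (_ != _); case: (_ != _).
move=> [i j] [k l] Hx Hy.
have [Ii Ij aij bij Cx] := key _ Hx.
have [Ik Il akl bkl Cy] := key _ Hy.
rewrite /h /=.
case: Cx => [[EA EB]|[EA [EB NA]]]; case: Cy => [[EA' EB']|[EA' [EB' NA']]];
  rewrite ?(negbTE NA) ?(negbTE NA') ?EA ?EA' ?eqxx => -[E1 E2].
- have ik : i = k by apply: Hinj => //; rewrite E1 E2.
  subst k.
  have ajl : a j = a l by apply: (set2_eq_l (a := a i)); rewrite EA EA'.
  have bjl : b j = b l by apply: (set2_eq_l (a := b i)); rewrite EB EB'.
  by rewrite (Hinj j l) // ajl bjl.
- have ik : i = k by apply: Hinj => //; rewrite E1 E2 finset.setUC.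
  by subst k; move: (Hab i Ii); rewrite E1 eqxx.
- have ik : i = k by apply: Hinj => //; rewrite E1 E2 finset.setUC.
  by subst k; move: (Hab i Ii); rewrite E2 eqxx.
- have ik : i = k by apply: Hinj => //; rewrite finset.setUC E1 E2 finset.setUC.
  subst k.
  have ajl : a j = a l by apply: (set2_eq_l (a := a i)); rewrite EA EA'.
  have bjl : b j = b l by apply: (set2_eq_l (a := b i)); rewrite EB EB'.
  by rewrite (Hinj j l) // ajl bjl.
Qed.
Local Open Scope ring_scope.

Lemma bad_bound (R : realFieldType) (S T : finType) (I : {set S}) (g k : S -> T) (c : R) :
  (forall t, #|[set j | g j == t]|%:R <= c) ->
  #|[set ij in finset.setX I I | g ij.2 == k ij.1]|%:R <= #|I|%:R * c.
Proof.
move=> Hc.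
rewrite (card_fiber_sum (I := I)); last by move=> x; rewrite !inE => /andP[/andP[]].
rewrite natr_sum.
apply: le_trans (_ : \sum_(i in I) c <= _).
  apply: ler_sum => i _; apply: le_trans (Hc (k i)).
  rewrite ler_nat; apply: subset_leq_card; apply/fintype.subsetP => j.
  by rewrite !inE /= => /andP[].
by rewrite sumr_const mulr_natl.
Qed.

Lemma count_good (R : realFieldType) (S T : finType) (a b : S -> T) (I : {set S}) (c : R) :
  (forall i, i \in I -> a i != b i) ->
  (forall t, #|[set j | a j == t]|%:R <= c) ->
  (forall t, #|[set j | b j == t]|%:R <= c) ->
  #|I|%:R ^+ 2 - 3 * (#|I|%:R * c) <=
  #|[set ij in finset.setX I I | [&& a ij.1 != a ij.2, b ij.1 != b ij.2 &
       [set a ij.1; a ij.2] != [set b ij.1; b ij.2]]]|%:R.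
Proof.
move=> Hab Ha Hb.
set G := [set ij in finset.setX I I | _].
set B1 := [set ij in finset.setX I I | a ij.2 == a ij.1].
set B2 := [set ij in finset.setX I I | b ij.2 == b ij.1].
set B3 := [set ij in finset.setX I I | b ij.2 == a ij.1].
have h1 := bad_bound I a Ha. have h2 := bad_bound I b Hb. have h3 := bad_bound I a Hb.
have cov : (#|finset.setX I I| <= #|G| + (#|B1| + (#|B2| + #|B3|)))%N.
  apply: leq_trans (subset_leq_card (_ : finset.setX I I \subset G :|: (B1 :|: (B2 :|: B3)))) _.
    apply/fintype.subsetP => -[i j] Hx.
    move: (Hx); rewrite inE /= => /andP[Ii Ij].
    rewrite !inE Ii Ij /=.
    have [E1|E1] := eqVneq (a j) (a i); first by rewrite E1 !orbT.
    have [E2|E2] := eqVneq (b j) (b i); first by rewrite E2 !orbT.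
    have [E3|E3] := eqVneq (b j) (a i); first by rewrite E3 !orbT.
    rewrite /= !orbF.
    apply/negP => /eqP E.
    have : a i \in [set b i; b j] by rewrite -E !inE eqxx.
    rewrite !inE (negbTE (Hab i Ii)) /= => /eqP E4.
    by rewrite E4 eqxx in E3.
  apply: leq_trans (leq_card_setU _ _).1 _; rewrite leq_add2l.
  apply: leq_trans (leq_card_setU _ _).1 _; rewrite leq_add2l.
  exact: (leq_card_setU _ _).1.
move: cov; rewrite cardsX -(ler_nat R) !natrD natrM => cov.
rewrite expr2; lra.
Qed.
Unset Implicit Arguments.

Theorem lemma5p2 (R : realType) (eps : R) :
  0 < eps < 1 ->
  exists N : nat, forall n : nat, (N <= n)%N ->
  forall m : nat,
    (m%:Z = Num.ceil (n%:R / (ln (n%:R : R)) ^+ 8)) ->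
  forall (s : nat) (u v : 'I_s -> 'I_n),
    is_pairing u v -> eps * n%:R <= s%:R ->
  forall pi : 'I_n -> 'I_m,
    respectful eps u v pi ->
    (forall x : 'I_m, #|[set y | pi y == x]|%:R <= 2 * n%:R / (m%:R : R)) ->
    eps ^+ 4 * (n%:R) ^+ 2 / 6 <= (#|Pi_set u v pi|%:R : R).
Proof.
move=> /andP[e0 e1].
have e20 : 0 < eps ^+ 2 by rewrite exprn_gt0.
set K : R := 9`!%:R * 18 / eps ^+ 2.
have F0 : 0 < (9`!%:R : R) by rewrite ltr0n fact_gt0.
have K0 : 0 < K by rewrite /K divr_gt0 // mulr_gt0.
exists (Num.bound (expR K)) => n Hn m Hm s u v [uinj [vinj uv]] Hs pi
  [I [HI [Hab Hinj]]] Hfib.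
have nK : expR K < n%:R.
  apply: lt_le_trans (archi_boundP (expR_ge0 K)) _; by rewrite ler_nat.
have n0 : 0 < (n%:R : R) by apply: lt_trans nK; exact: expR_gt0.
set t := ln (n%:R : R).
have tK : K <= t by rewrite -ler_expR /t lnK // ?ltW //; rewrite posrE.
have t0 : 0 < t by apply: lt_le_trans tK.
have t9 : t ^+ 9 / 9`!%:R <= n%:R.
  have := expR_ge1Dxn 8 (ltW t0); rewrite /t lnK ?posrE //.
  by apply: le_trans; rewrite lerDr.
have t8 : 18 / eps ^+ 2 * t ^+ 8 <= n%:R.
  apply: le_trans t9.
  rewrite ler_pdivlMr // exprS.
  have : 18 / eps ^+ 2 * 9`!%:R = K by rewrite /K mulrC mulrA.
  have t8n : 0 <= t ^+ 8 by rewrite exprn_ge0 // ltW.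
  move=> HK; rewrite mulrAC HK [t ^+ 9]exprS; exact: ler_wpM2r.
have mge : n%:R / t ^+ 8 <= (m%:R : R).
  have -> : (m%:R : R) = (m%:Z)%:~R by rewrite pmulrn.
  by rewrite Hm; exact: ceil_ge.
have t80 : 0 < t ^+ 8 by rewrite exprn_gt0.
have m18 : 18 / eps ^+ 2 <= (m%:R : R).
  by apply: le_trans mge; rewrite ler_pdivlMr.
have m0 : 0 < (m%:R : R) by apply: lt_le_trans m18; rewrite divr_gt0.
set c : R := 2 * n%:R / m%:R.
have c0 : 0 <= c by rewrite /c divr_ge0 // mulr_ge0 // ltW.
have cL : c <= eps ^+ 2 * n%:R / 9.
  rewrite /c ler_pdivrMr //.
  have : 18 <= m%:R * eps ^+ 2 by rewrite -ler_pdivrMr.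
  move=> H; nra.
have fibu : forall w : 'I_s -> 'I_n, injective w ->
    forall x, #|[set j | pi (w j) == x]|%:R <= c.
  move=> w winj x; apply: le_trans (Hfib x).
  rewrite ler_nat -(card_imset _ winj); apply: subset_leq_card.
  apply/fintype.subsetP => y /imsetP[j]; rewrite !inE => Hj Ey; by rewrite Ey.
have HG := count_good (a := fun i => pi (u i)) (b := fun i => pi (v i)) Hab
  (fibu u uinj) (fibu v vinj).
have H4 : (#|[set ij in finset.setX I I | [&& pi (u ij.1) != pi (u ij.2), pi (v ij.1) != pi (v ij.2) &
       [set pi (u ij.1); pi (u ij.2)] != [set pi (v ij.1); pi (v ij.2)]]]| <=
    4 * #|Pi_set u v pi|)%N.
  exact: (fiber4 (a := fun i => pi (u i)) (b := fun i => pi (v i)) Hab Hinj).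
move: H4; rewrite -(ler_nat R) natrM => H4.
set x : R := #|I|%:R in HG HI.
set g : R := #|_|%:R in HG H4.
set p : R := #|Pi_set u v pi|%:R in H4 *.
set L : R := eps ^+ 2 * n%:R in cL.
have xL : L <= x.
  apply: le_trans HI; rewrite /L expr2 -mulrA; apply: ler_wpM2l => //; exact: ltW.
have L0 : 0 <= L by rewrite /L mulr_ge0 // ltW.
have E : eps ^+ 4 * n%:R ^+ 2 = L ^+ 2 by rewrite /L; ring.
rewrite E.
have h1 : 0 <= x * (L / 9 - c) by apply: mulr_ge0; [exact: le_trans xL| lra].
have h2 : 0 <= x * (x - L) by apply: mulr_ge0; [exact: le_trans xL| lra].
have h3 : 0 <= (x - L) * (x + L) by apply: mulr_ge0; lra.
have cL' : c <= L / 9 by move: cL; rewrite /L.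
nra.
Qed.
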